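(* Let $\mathcal{A}\subset M_n(\mathbb{F}_q)$ be an $\mathbb{F}_q$-subalgebra of dimension $m$ with basis $v_1,\dots,v_m$, let $\mathbb{G}$ be its multiplicative group as an algebraic group over $\mathbb{F}_q$, let $A(\mathbf{t})=\sum_{i=1}^mt_iv_i$ with indeterminates $\mathbf{t}=(t_1,\dots,t_m)$, and let $d=\det A(\mathbf{t})$. Let $L$ be an infinite field containing $\mathbb{F}_q$, let $p\in L[\mathbf{t},1/d]$ be nonzero, and let $B\in\mathbb{G}(L)$. Then there exists $\boldsymbol\xi\in L^m$ with $d(\boldsymbol\xi)\neq0$ and $p(\boldsymbol\xi)\ne0$ such that $A(\boldsymbol\xi)$ is Frobenius-equivalent to $B$ in $\mathbb{G}(L)$, i.e. $A(\boldsymbol\xi)=Y^{-1}BY^{(q)}$ for some $Y\in\mathbb{G}(L)$.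
   Context: For a commutative $\mathbb{F}_q$-algebra $L$, $\mathbb{G}(L)=(\mathcal{A}\otimes_{\mathbb{F}_q}L)^\times$, viewed as invertible matrices in the $L$-span of $\mathcal{A}$ in $M_n(L)$; $Y^{(q)}$ is the entrywise $q$-th power. *)

(* Defs.v *)
From HB Require Import structures.
From mathcomp Require Import all_boot all_order all_algebra all_field.
From mathcomp Require Import mpoly.
Set Implicit Arguments. Unset Strict Implicit. Unset Printing Implicit Defensive.
Import Order.TTheory GRing.Theory.
Local Open Scope ring_scope.

(* F plays the role of F_q (q = #|F|); L is a field with an embedding
   iota : F -> L.  The subalgebra A of M_n(F) is given by a basis v. *)

Definition mx_free (F : fieldType) (n m : nat) (v : 'I_m -> 'M[F]_n) : Prop :=
  forall c : 'I_m -> F, \sum_(i < m) c i *: v i = 0 -> forall i, c i = 0.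

Definition in_span (R : comNzRingType) (n m : nat) (v : 'I_m -> 'M[R]_n)
  (X : 'M[R]_n) : Prop :=
  exists c : 'I_m -> R, X = \sum_(i < m) c i *: v i.

Definition is_subalg_basis (F : fieldType) (n m : nat) (v : 'I_m -> 'M[F]_n) : Prop :=
  [/\ mx_free v, in_span v 1%:M & forall i j, in_span v (v i *m v j)].

(* G(L) = (A (x)_F L)^x : invertible matrices in the L-span of A inside M_n(L) *)
Definition GL_pts (F L : fieldType) (iota : {rmorphism F -> L}) (n m : nat)
  (v : 'I_m -> 'M[F]_n) (Y : 'M[L]_n) : Prop :=
  in_span (fun i => map_mx iota (v i)) Y /\ Y \in unitmx.

Definition Aeval (F L : fieldType) (iota : {rmorphism F -> L}) (n m : nat)
  (v : 'I_m -> 'M[F]_n) (xi : 'I_m -> L) : 'M[L]_n :=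
  \sum_(i < m) xi i *: map_mx iota (v i).

Definition Agen (F L : fieldType) (iota : {rmorphism F -> L}) (n m : nat)
  (v : 'I_m -> 'M[F]_n) : 'M[{mpoly L[m]}]_n :=
  \matrix_(a, b) \sum_(i < m) 'X_i * (iota (v i a b))%:MP.

Definition dgen (F L : fieldType) (iota : {rmorphism F -> L}) (n m : nat)
  (v : 'I_m -> 'M[F]_n) : {mpoly L[m]} := \det (Agen iota v).

Definition frobq (L : fieldType) (q n : nat) (Y : 'M[L]_n) : 'M[L]_n :=
  map_mx (fun x => x ^+ q) Y.

(* Main.v *)
Require Import Defs.
From HB Require Import structures.
From mathcomp Require Import all_boot all_order all_algebra all_field.
From mathcomp Require Import mpoly.
From mathcomp Require Import pgroup abelian.
From mathcomp Require Import ring.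
Import GRing.Theory.
Local Open Scope ring_scope.

Section Inf.
Variable L : fieldType.
Hypothesis inf : forall s : seq L, exists x : L, x \notin s.

Lemma uniq_seq_size k : exists s : seq L, uniq s /\ size s = k.
Proof.
elim: k => [|k [s [us ss]]]; first by exists [::].
have [x xs] := inf s; exists (x :: s); by rewrite /= xs us ss.
Qed.

Lemma poly_nonroot (p : {poly L}) : p != 0 -> exists x, p.[x] != 0.
Proof.
move=> pn0; have [s [us ss]] := uniq_seq_size (size p).
case: (boolP (all (root p) s)) => [al|].
  by have := max_poly_roots pn0 al us; rewrite ss ltnn.
by case/allPn => x _ rx; exists x.
Qed.

End Inf.
Lemma ord_split n (i : 'I_n.+1) : (exists j : 'I_n, i = widen_ord (leqnSn n) j) \/ i = ord_max.
Proof.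
case: (ltnP i n) => h; [left; exists (Ordinal h); exact: val_inj|].
right; apply: val_inj => /=; have := ltn_ord i; rewrite ltnS => h2; apply/eqP; by rewrite eqn_leq h h2.
Qed.

Section MP.
Variable L : fieldType.
Variable n : nat.
Definition cutm (m : 'X_{1..n.+1}) : 'X_{1..n} := [multinom m (widen_ord (leqnSn n) i) | i < n].

Lemma cutm_inj (m1 m2 : 'X_{1..n.+1}) : cutm m1 = cutm m2 -> m1 ord_max = m2 ord_max -> m1 = m2.
Proof.
move=> hc hl; apply/mnmP => i; have [[j hj]|hj] := ord_split _ i; rewrite hj //.
by have := congr1 (fun mm : 'X_{1..n} => mm j) hc; rewrite !mnmE.
Qed.

Lemma meval_split (p : {mpoly L[n.+1]}) (w : 'I_n -> L) (x : L) :
  let v := fun i : 'I_n.+1 => if (insub (val i) : option 'I_n) is Some j then w j else x in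
  p.@[v] = \sum_(m <- msupp p) p@_m * ((\prod_(i < n) w i ^+ (cutm m) i) * x ^+ (m ord_max)).
Proof.
move=> v; rewrite mevalE; apply: eq_bigr => m _; congr (_ * _).
rewrite big_ord_recr /=; congr (_ * _).
  apply: eq_bigr => i _; rewrite mnmE /v.
  by rewrite insubT //= => h; congr (w _ ^+ _); apply: val_inj.
by rewrite /v insubF //= ltnn.
Qed.
End MP.
Arguments cutm {n}.

Section MP2.
Variable L : fieldType.
Hypothesis inf : forall s : seq L, exists x : L, x \notin s.

Lemma mpoly0_const (p : {mpoly L[0]}) v : p = (p.@[v])%:MP.
Proof.
have m0 : forall m : 'X_{1..0}, m = 0%MM by move=> m; apply/mnmP => -[].
rewrite {1}(mpolyE p) mevalE raddf_sum /=; apply: eq_bigr => m _.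
by rewrite (m0 m) mpolyX0 big_ord0 mulr1 -mul_mpolyC mulr1.
Qed.

Lemma mpoly_nonroot n (p : {mpoly L[n]}) : p != 0 -> exists v, p.@[v] != 0.
Proof.
elim: n p => [|n IH] p pn0.
  exists (fun _ => 0); apply: contra pn0 => /eqP h.
  by rewrite (mpoly0_const p (fun _ => 0)) h.
pose q k : {mpoly L[n]} :=
  \sum_(m <- msupp p | m ord_max == k) p@_m *: 'X_[cutm m].
have m0s := mlead_supp pn0; set m0 := mlead p in m0s.
have qk0 : (q (m0 ord_max))@_(cutm m0) = p@_m0.
  rewrite /q raddf_sum /= big_mkcond (bigD1_seq m0) //= ?msupp_uniq //.
  rewrite eqxx mcoeffZ mcoeffX eqxx mulr1 big1 ?addr0 // => m hne.
  case: eqP => hm //; rewrite mcoeffZ mcoeffX; case: eqP => [hc|]; last by rewrite mulr0.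
  by case/negP: hne; apply/eqP; apply: cutm_inj => //; apply/eqP.
have [w hw] : exists w, (q (m0 ord_max)).@[w] != 0.
  apply: IH; apply/eqP => h; move: qk0; rewrite h mcoeff0 => /esym/eqP.
  by move: m0s; rewrite mcoeff_msupp => /negbTE ->.
pose Pw : {poly L} := \poly_(k < msize p) (q k).@[w].
have hk0 : (m0 ord_max < msize p)%N.
  apply: leq_ltn_trans (msize_mdeg_lt m0s); rewrite mdegE.
  by rewrite (bigD1 ord_max) //= leq_addr.
have Pwn0 : Pw != 0.
  apply/eqP => h; have := congr1 (fun r : {poly L} => r`_(m0 ord_max)) h.
  by rewrite /= coef_poly hk0 coef0 => /eqP; rewrite (negbTE hw).
have [x hx] := @poly_nonroot L inf Pw Pwn0.
exists (fun i : 'I_n.+1 => if (insub (val i) : option 'I_n) is Some j then w j else x).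
rewrite meval_split; move: hx; rewrite horner_poly.
rewrite (eq_bigr (fun k : 'I_(msize p) => \sum_(m <- msupp p) (if m ord_max == k then
     p@_m * (\prod_(i < n) w i ^+ (cutm m) i) * x ^+ k else 0))); last first.
  move=> k _; rewrite /q raddf_sum /= big_mkcond /= mulr_suml; apply: eq_bigr => m _.
  by case: eqP => _; rewrite ?mul0r // mevalZ mevalX.
rewrite exchange_big /=; congr (_ != 0); apply: eq_big_seq => m hm.
have hmk : (m ord_max < msize p)%N.
  apply: leq_ltn_trans (msize_mdeg_lt hm); rewrite mdegE.
  by rewrite (bigD1 ord_max) //= leq_addr.
rewrite -big_mkcond /= (eq_bigl (fun k => k == Ordinal hmk)); last first.
  move=> k; rewrite eq_sym; apply/eqP/eqP => [h|->] //; apply: val_inj; exact: h.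
by rewrite big_pred1_eq /= mulrA.
Qed.
End MP2.
Section Frq.
Variables (L : fieldType) (q : nat).
Hypothesis Hq : [pchar L].-nat q.
Definition frq (H : [pchar L].-nat q) (x : L) := x ^+ q.

Lemma q_gt0 : (0 < q)%N.
Proof. by case/andP: Hq. Qed.

Fact frq_nmod : nmod_morphism (frq Hq).
Proof.
split; first by rewrite /frq expr0n eqn0Ngt q_gt0.
by move=> x y; rewrite /frq exprDn_pchar.
Qed.
HB.instance Definition _ := GRing.isNmodMorphism.Build L L (frq Hq) frq_nmod.
Fact frq_mon : monoid_morphism (frq Hq).
Proof. by split; [rewrite /frq expr1n | move=> x y; rewrite /frq exprMn]. Qed.
HB.instance Definition _ := GRing.isMonoidMorphism.Build L L (frq Hq) frq_mon.
End Frq.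


Lemma card_pnat (F : finFieldType) (L : fieldType) (iota : {rmorphism F -> L}) :
  [pchar L].-nat #|F|.
Proof.
have [p pp pc] := finPcharP F.
have := fin_ring_pchar_abelem pc => /abelem_pgroup; rewrite /pgroup cardsT => h.
apply: sub_in_pnat h => r _; rewrite inE /= => /eqP ->.
by rewrite (fmorph_pchar iota).
Qed.
Lemma inv_closed (L : fieldType) n (S : 'M[L]_n -> Prop)
  (S0 : S 0) (SD : forall X Y, S X -> S Y -> S (X + Y))
  (SZ : forall a X, S X -> S (a *: X)) (SM : forall X Y, S X -> S Y -> S (X *m Y))
  (S1 : S 1%:M) Y : S Y -> S (invmx Y).
Proof.
case: n S S0 SD SZ SM S1 Y => [|n'] S S0 SD SZ SM S1 Y SY.
  by rewrite (flatmx0 (invmx Y)).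
have Sh : forall r : {poly L}, S (horner_mx Y r).
  elim/poly_ind => [|r c IH]; first by rewrite rmorph0.
  rewrite rmorphD rmorphM /= horner_mx_X horner_mx_C.
  apply: SD; first exact: SM.
  by rewrite -scalemx1; apply: SZ.
case: (boolP (Y \in unitmx)) => hu; last by rewrite /invmx (negbTE hu).
set p := char_poly Y.
have CH := Cayley_Hamilton Y.
have ep : p = (p`_0)%:P + drop_poly 1 p * 'X.
  rewrite -{1}(poly_take_drop 1 p) expr1; congr (_ + _).
  by apply/polyP => i; rewrite coef_take_poly coefC; case: i.
set R := horner_mx Y (drop_poly 1 p).
have eR : R *m Y = - (p`_0)%:M.
  by apply/eqP; rewrite -subr_eq0 opprK addrC; move: CH; rewrite -/p {1}ep rmorphD rmorphM /= horner_mx_X horner_mx_C => ->.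
have p0u : p`_0 != 0.
  by rewrite /p char_poly_det mulf_eq0 negb_or signr_eq0 /= -unitfE -unitmxE.
have inv : (- (p`_0)^-1 *: R) *m Y = 1%:M.
  by rewrite -scalemxAl eR scalerN scaleNr opprK scale_scalar_mx mulVf.
have -> : invmx Y = - (p`_0)^-1 *: R.
  by rewrite -[LHS]mul1mx -inv -mulmxA mulmxV // mulmx1.
by apply: SZ; apply: Sh.
Qed.
Section PolyMx.
Variables (L : fieldType) (n : nat).

Lemma ev_const (K : 'M[L]_n) s : map_mx (horner_eval s) (map_mx polyC K) = K.
Proof. by apply/matrixP => i j; rewrite !mxE /horner_eval hornerC. Qed.

Lemma coef_constM k (K : 'M[L]_n) (M : 'M[{poly L}]_n) :
  map_mx (coefp k) (map_mx polyC K *m M) = K *m map_mx (coefp k) M.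
Proof.
apply/matrixP => i j; rewrite !mxE /= coef_sum; apply: eq_bigr => l _.
by rewrite !mxE coefCM.
Qed.

Lemma coefX_scale k (M : 'M[{poly L}]_n) :
  map_mx (coefp k.+1) ('X *: M) = map_mx (coefp k) M.
Proof. by apply/matrixP => i j; rewrite !mxE /= coefXM. Qed.

Lemma coef_comp_mx k q (M : 'M[{poly L}]_n) : (1 < q)%N -> (0 < k < q)%N ->
  map_mx (coefp k) (map_mx (comp_poly 'X^q) M) = 0.
Proof.
move=> hq /andP [k0 kq]; apply/matrixP => i j; rewrite !mxE /= coef_comp_poly_Xn.
  by case: ifP => // /dvdn_leq => /(_ k0); rewrite leqNgt kq.
exact: ltnW.
Qed.

End PolyMx.

Section Main.
Variables (F : finFieldType) (L : fieldType) (iota : {rmorphism F -> L}) (n m : nat)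
  (v : 'I_m -> 'M[F]_n).
Hypothesis hsub : is_subalg_basis v.

Local Notation V := (fun i => map_mx iota (v i)).
Local Notation SP X := (in_span V X).

Lemma sp0 : SP 0.
Proof. by exists (fun _ => 0); rewrite big1 // => i _; rewrite scale0r. Qed.

Lemma spD X Y : SP X -> SP Y -> SP (X + Y).
Proof.
move=> [a ->] [b ->]; exists (fun i => a i + b i).
by rewrite -big_split /=; apply: eq_bigr => i _; rewrite scalerDl.
Qed.

Lemma spZ c X : SP X -> SP (c *: X).
Proof.
move=> [a ->]; exists (fun i => c * a i).
by rewrite scaler_sumr; apply: eq_bigr => i _; rewrite scalerA.
Qed.

Lemma sp_sum (I : Type) (r : seq I) (P : pred I) (G : I -> 'M[L]_n) :
  (forall i, P i -> SP (G i)) -> SP (\sum_(i <- r | P i) G i).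
Proof. move=> h; apply: big_ind => //; [exact: sp0 | exact: spD]. Qed.

Lemma sp_map (X : 'M[F]_n) : in_span v X -> SP (map_mx iota X).
Proof.
move=> [a ->]; exists (fun i => iota (a i)).
rewrite (big_morph (map_mx iota) (fun A B => map_mxD iota A B) (map_mx0 _ _ _)).
by apply: eq_bigr => i _; rewrite map_mxZ.
Qed.

Lemma sp1 : SP 1%:M.
Proof. by case: hsub => _ h _; rewrite -(map_mx1 iota); apply: sp_map. Qed.

Lemma spM X Y : SP X -> SP Y -> SP (X *m Y).
Proof.
move=> [a ->] [b ->]; rewrite mulmx_suml; apply: sp_sum => i _.
rewrite mulmx_sumr; apply: sp_sum => j _.
rewrite -scalemxAl -scalemxAr; apply: spZ; apply: spZ.
by rewrite -map_mxM; apply: sp_map; case: hsub => _ _; apply.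
Qed.

Lemma sp_Aeval c : SP (Aeval iota v c).
Proof. by exists c. Qed.

Lemma sp_inv Y : SP Y -> SP (invmx Y).
Proof.
apply: inv_closed; [exact: sp0|exact: spD|exact: spZ|exact: spM|exact: sp1].
Qed.

Local Notation q := #|F|.
Let Hq := @card_pnat F L iota.

Lemma frobqE (X : 'M[L]_n) : frobq q X = map_mx (@frq L q Hq) X.
Proof. by []. Qed.

Lemma frob_V i : map_mx (@frq L q Hq) (V i) = V i.
Proof.
by apply/matrixP => a b; rewrite !mxE /frq -rmorphXn expf_card.
Qed.

Lemma frob_Aeval c : frobq q (Aeval iota v c) = Aeval iota v (fun i => c i ^+ q).
Proof.
rewrite frobqE /Aeval raddf_sum /=; apply: eq_bigr => i _.
by rewrite map_mxZ frob_V.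
Qed.

Lemma sp_frob X : SP X -> SP (frobq q X).
Proof. by move=> [c ->]; rewrite -/(Aeval iota v c) frob_Aeval; apply: sp_Aeval. Qed.

Definition Vmat : 'M[F]_(m, n * n) := \matrix_(i < m) mxvec (v i).

Lemma Vmat_free : row_free Vmat.
Proof.
apply: inj_row_free => u hu.
case: hsub => hfree _ _.
have h0 : \sum_(i < m) u 0 i *: v i = 0.
  apply: (can_inj mxvecK); rewrite linear0 linear_sum /=.
  rewrite -[X in _ = X]hu mulmx_sum_row; apply: eq_bigr => i _.
  by rewrite linearZ /= rowK.
by apply/rowP => i; rewrite mxE; apply: (hfree _ h0 i).
Qed.

Lemma exC : exists C : 'M[L]_(n * n, m), map_mx iota Vmat *m C = 1%:M.
Proof.
apply/row_freeP; rewrite /row_free mxrank_map; exact: Vmat_free.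
Qed.

Section Coords.
Variable C : 'M[L]_(n * n, m).
Hypothesis hC : map_mx iota Vmat *m C = 1%:M.

Definition coordsf (X : 'M[L]_n) (i : 'I_m) : L := (mxvec X *m C) 0 i.

Lemma coordsK c i : coordsf (Aeval iota v c) i = c i.
Proof.
have e : mxvec (Aeval iota v c) = \row_j c j *m map_mx iota Vmat.
  rewrite /Aeval linear_sum mulmx_sum_row /=; apply: eq_bigr => j _.
  by rewrite linearZ /= mxE -map_row rowK map_mxvec.
by rewrite /coordsf e -mulmxA hC mulmx1 mxE.
Qed.

Lemma coords_span X : SP X -> Aeval iota v (coordsf X) = X.
Proof.
move=> [c ->]; rewrite -/(Aeval iota v c) /Aeval; apply: eq_bigr => i _.
by rewrite -/(Aeval iota v c) coordsK.
Qed.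

Lemma coordsZ a X i : coordsf (a *: X) i = a * coordsf X i.
Proof. by rewrite /coordsf linearZ /= -scalemxAl mxE. Qed.

Lemma coords_poly (l : {additive {poly L} -> L})
  (hl : forall c x, l (c%:P * x) = c * l x) (P : 'M[{poly L}]_n) i :
  l ((mxvec P *m map_mx polyC C) 0 i) = coordsf (map_mx l P) i.
Proof.
rewrite /coordsf !mxE raddf_sum /=; apply: eq_bigr => j _.
by rewrite mxE mulrC hl -map_mxvec mxE mulrC.
Qed.

Lemma dgen_eval xi : (dgen iota v).@[xi] = \det (Aeval iota v xi).
Proof.
rewrite /dgen -det_map_mx; congr (\det _); apply/matrixP => a b.
rewrite !mxE /Aeval summxE raddf_sum /=; apply: eq_bigr => i _.
by rewrite mevalM mevalXU mevalC !mxE.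
Qed.

Hypothesis inf : forall s : seq L, exists x : L, x \notin s.

Lemma core (f : {mpoly L[m]}) (k : nat) (B : 'M[L]_n) :
  f != 0 -> GL_pts iota v B ->
  exists xi : 'I_m -> L,
    [/\ (dgen iota v).@[xi] != 0,
        f.@[xi] / (dgen iota v).@[xi] ^+ k != 0 &
        exists Y : 'M[L]_n, GL_pts iota v Y /\
          Aeval iota v xi = invmx Y *m B *m frobq #|F| Y].
Proof.
move=> fnz [SB uB].
pose b := coordsf B.
pose f' := f \mPo [tuple (b i)%:MP + 'X_i | i < m].
have ef' : forall y, f'.@[y] = f.@[fun i => b i + y i].
  move=> y; rewrite comp_mpoly_meval; apply: meval_eq => i.
  by rewrite tnth_mktuple mevalD mevalC mevalXU.
have f'nz : f' != 0.
  have [x hx] := @mpoly_nonroot L inf _ _ fnz.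
  apply/eqP => h; move: (ef' (fun i => x i - b i)); rewrite h meval0.
  rewrite (meval_eq (v2 := x)) => [e|i]; last by rewrite addrC subrK.
  by move: hx; rewrite -e eqxx.
pose Pr kk := has (fun be => mdeg be == kk) (msupp f').
have exPr : exists kk, Pr kk.
  by exists (mdeg (mlead f')); apply/hasP; exists (mlead f') => //; exact: mlead_supp.
pose r := ex_minn exPr.
have [Prr rmin] : Pr r /\ forall kk, Pr kk -> (r <= kk)%N.
  by rewrite /r; case: ex_minnP.
have rle : forall be, be \in msupp f' -> (r <= mdeg be)%N.
  by move=> be hb; apply: rmin; apply/hasP; exists be.
have [be0 be0s /eqP be0r] := hasP Prr.
pose h := \sum_(be <- msupp f' | mdeg be == r) f'@_be *: 'X_[be].
have hnz : h != 0.
  have : h@_be0 = f'@_be0.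
    rewrite /h raddf_sum /= big_mkcond (bigD1_seq be0) //= ?msupp_uniq //.
    rewrite be0r eqxx mcoeffZ mcoeffX eqxx mulr1 big1 ?addr0 // => be hne.
    case: ifP => _ //; rewrite mcoeffZ mcoeffX; case: eqP => [e|]; last by rewrite mulr0.
    by rewrite e eqxx in hne.
  move=> e; apply/eqP => h0; move: e; rewrite h0 mcoeff0 => /esym/eqP.
  by move: be0s; rewrite mcoeff_msupp => /negbTE ->.
have [w hw] := @mpoly_nonroot L inf _ _ hnz.
pose W := Aeval iota v w.
pose T0 := - (W *m invmx B).
have ST0 : SP T0.
  by rewrite /T0 -scaleN1r; apply: spZ; apply: spM; [apply: sp_Aeval | exact: sp_inv SB].
have T0B : T0 *m B = - W by rewrite /T0 mulNmx -mulmxA mulVmx // mulmx1.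
have q2 : (1 < #|F|)%N := finNzRing_gt1 F.
pose fr := @frq L #|F| Hq.
pose Tq := map_mx fr T0.
pose T0p := map_mx polyC T0.
pose Bp := map_mx polyC B.
pose Tqp := map_mx polyC Tq.
pose Ms1 : 'M[{poly L}]_n := 1%:M - 'X *: Tqp.
pose Ms := map_mx (comp_poly 'X^#|F|) Ms1.
pose D := \det Ms.
pose Adj := \adj Ms.
pose N0 : 'M[{poly L}]_n := 1%:M - 'X *: T0p.
pose E := \det N0.
pose P := N0 *m Bp *m Adj.
pose u i := (mxvec P *m map_mx polyC C) 0 i.
have evN0 s : map_mx (horner_eval s) N0 = 1%:M - s *: T0.
  by apply/matrixP => i j; rewrite !mxE /horner_eval !hornerE hornerMn hornerC.
have evMs s : map_mx (horner_eval s) Ms = 1%:M - s ^+ #|F| *: Tq.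
  by apply/matrixP => i j; rewrite !mxE /horner_eval horner_comp hornerXn !hornerE hornerMn hornerC.
have evD s : D.[s] = \det (1%:M - s ^+ #|F| *: Tq).
  by rewrite -evMs det_map_mx.
have evE s : E.[s] = \det (1%:M - s *: T0).
  by rewrite -evN0 det_map_mx.
have evP s : map_mx (horner_eval s) P = (1%:M - s *: T0) *m B *m \adj (1%:M - s ^+ #|F| *: Tq).
  by rewrite !map_mxM evN0 ev_const map_mx_adj evMs.
have u_ev s i : (u i).[s] = coordsf (map_mx (horner_eval s) P) i.
  exact: (coords_poly (horner_eval s) (fun c x => hornerCM c x s) P i).
have u_coef kk i : (u i)`_kk = coordsf (map_mx (coefp kk) P) i.
  exact: (coords_poly (coefp kk) (fun c x => coefCM c x kk) P i).
have q0 : (0:L) ^+ #|F| = 0 by rewrite expr0n eqn0Ngt (ltnW q2).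
have D0 : D.[0] = 1 by rewrite evD q0 scale0r subr0 det1.
have E0 : E.[0] = 1 by rewrite evE scale0r subr0 det1.
have coef0P : map_mx (coefp 0) P = B.
  have -> : map_mx (coefp 0) P = map_mx (horner_eval 0) P.
    by apply: eq_map_mx => p; rewrite /= /horner_eval horner_coef0.
  by rewrite evP q0 !scale0r subr0 adj1 mul1mx mulmx1.
have eAdj : Adj = map_mx (comp_poly 'X^#|F|) (\adj Ms1) by rewrite /Adj map_mx_adj.
have Adj1 : map_mx (coefp 1) Adj = 0 by rewrite eAdj coef_comp_mx.
have Adj0 : map_mx (coefp 0) Adj = 1%:M.
  have -> : map_mx (coefp 0) Adj = map_mx (horner_eval 0) Adj.
    by apply: eq_map_mx => p; rewrite /= /horner_eval horner_coef0.
  by rewrite map_mx_adj evMs q0 scale0r subr0 adj1.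
have coef1P : map_mx (coefp 1) P = W.
  have -> : P = Bp *m Adj - 'X *: (map_mx polyC (T0 *m B) *m Adj).
    by rewrite /P /N0 !mulmxBl !mul1mx -!scalemxAl map_mxM.
  rewrite map_mxB coef_constM coefX_scale coef_constM Adj1 Adj0 mulmx0 mulmx1 T0B.
  by rewrite sub0r opprK.
have D1 : D`_1 = 0.
  rewrite /D /Ms det_map_mx /= coef_comp_poly_Xn ?(ltnW q2) //.
  by case: ifP => // hd; have := @dvdn_leq _ 1 isT hd; rewrite leqNgt q2.
pose G i := u i - (b i)%:P * D.
have D0c : D`_0 = 1 by rewrite -horner_coef0 D0.
have G0 i : (G i)`_0 = 0.
  by rewrite coefB coefCM u_coef coef0P D0c mulr1 subrr.
have G1 i : (G i)`_1 = w i.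
  by rewrite coefB coefCM u_coef coef1P D1 mulr0 subr0 coordsK.
pose Q i := drop_poly 1 (G i).
have eG i : G i = Q i * 'X.
  rewrite -{1}(poly_take_drop 1 (G i)) expr1.
  have -> : take_poly 1 (G i) = 0.
    by apply/polyP => j; rewrite coef_take_poly coef0; case: j => [|j] //=; rewrite G0.
  by rewrite add0r.
have Q0 i : (Q i).[0] = w i by rewrite horner_coef0 coef_drop_poly G1.
pose N := msize f'.
pose K := \sum_(be <- msupp f') f'@_be *: ('X^(mdeg be - r) * \prod_(i < m) Q i ^+ be i * D ^+ (N - mdeg be)).
have K0 : K.[0] = h.@[w].
  rewrite horner_sum /h raddf_sum /= [RHS]big_mkcond /=; apply: eq_big_seq => be hb.
  rewrite hornerZ !hornerM horner_prod hornerXn horner_exp D0 expr1n mulr1 expr0n subn_eq0.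
  have -> : (mdeg be <= r)%N = (mdeg be == r) by rewrite eqn_leq rle ?andbT.
  case: (mdeg be == r); last by rewrite mul0r mulr0.
  rewrite mevalZ mevalX mul1r; congr (_ * _); apply: eq_bigr => i _.
  by rewrite horner_exp Q0.
have Knz : K != 0 by apply/eqP => e; move: hw; rewrite -K0 e horner0 eqxx.
have Dnz : D != 0 by apply/eqP => e; move: D0; rewrite e horner0 => /eqP; rewrite eq_sym oner_eq0.
have Enz : E != 0 by apply/eqP => e; move: E0; rewrite e horner0 => /eqP; rewrite eq_sym oner_eq0.
pose Z := 'X * K * D * E.
have Znz : Z != 0 by rewrite !mulf_neq0 // polyX_eq0.
have [s0 hs0] := @poly_nonroot L inf Z Znz.
move: hs0; rewrite !hornerM hornerX !mulf_eq0 !negb_or => /andP[/andP[/andP[s0n Kn] Dn] En].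
pose M0 := 1%:M - s0 *: T0.
have M0u : M0 \in unitmx by rewrite unitmxE unitfE -evE.
have SM0 : SP M0.
  by rewrite /M0 -scaleNr; apply: spD; [exact: sp1 | exact: spZ].
pose Y := invmx M0.
have SY : SP Y := sp_inv _ SM0.
have Yu : Y \in unitmx by rewrite unitmx_inv.
pose Ms0 := 1%:M - s0 ^+ #|F| *: Tq.
have fM0 : frobq #|F| M0 = Ms0.
  by rewrite frobqE /M0 map_mxB map_mxZ map_mx1.
have fY : frobq #|F| Y = invmx Ms0 by rewrite frobqE map_invmx -frobqE fM0.
have Ms0u : Ms0 \in unitmx by rewrite unitmxE unitfE -evD.
pose X := invmx Y *m B *m frobq #|F| Y.
have eX : X = (D.[s0])^-1 *: map_mx (horner_eval s0) P.
  by rewrite /X invmxK fY evP /invmx Ms0u -evD scalemxAr.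
have SX : SP X.
  apply: spM; first by apply: spM => //; exact: sp_inv.
  exact: sp_frob.
pose xi := coordsf X.
have AX : Aeval iota v xi = X := coords_span _ SX.
have Xu : X \in unitmx by rewrite !unitmx_mul unitmx_inv Yu uB fY unitmx_inv Ms0u.
pose d := D.[s0].
pose y i := (Q i).[s0] * s0 / d.
have exi i : xi i = b i + y i.
  rewrite /xi eX coordsZ -u_ev.
  have -> : u i = Q i * 'X + (b i)%:P * D by rewrite -eG /G subrK.
  rewrite hornerD hornerM hornerX hornerCM -/d /y mulrDr mulrC addrC; congr (_ + _).
    by rewrite mulrCA mulVf ?mulr1.
have key : f'.@[y] * d ^+ N = s0 ^+ r * K.[s0].
  rewrite mevalE mulr_suml horner_sum mulr_sumr; apply: eq_big_seq => be hb.
  rewrite hornerZ !hornerM horner_prod hornerXn horner_exp.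
  have ey : \prod_i y i ^+ be i = (\prod_i (Q i).[s0] ^+ be i) * (s0 / d) ^+ mdeg be.
    rewrite mdegE -prodrXr -big_split /=; apply: eq_bigr => i _.
    by rewrite /y -mulrA exprMn.
  rewrite ey (expfB _ (msize_mdeg_lt hb)) exprMn exprVn.
  rewrite -{1}(subnKC (rle _ hb)) exprD.
  set A := \prod_i _; set a := s0 ^+ r; set c := s0 ^+ (mdeg be - r).
  set e := d ^+ mdeg be; set g := d ^+ N.
  have -> : \prod_i (Q i ^+ be i).[s0] = A by apply: eq_bigr => i _; rewrite horner_exp.
  ring.
have fxi : f.@[xi] != 0.
  have -> : f.@[xi] = f'.@[y] by rewrite ef'; apply: meval_eq => i; rewrite exi.
  apply/eqP => e0; move: key; rewrite e0 mul0r => /esym/eqP.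
  by rewrite mulf_eq0 expf_eq0 (negbTE s0n) (negbTE Kn) andbF.
have dxi : (dgen iota v).@[xi] != 0 by rewrite dgen_eval AX -unitfE -unitmxE.
exists xi; split => //.
  by rewrite mulf_neq0 // invr_neq0 // expf_neq0.
by exists Y; split => //; split.
Qed.

End Coords.

End Main.

Theorem lemma4p8 (F : finFieldType) (L : fieldType) (iota : {rmorphism F -> L})
  (n m : nat) (v : 'I_m -> 'M[F]_n) (f : {mpoly L[m]}) (k : nat) (B : 'M[L]_n) :
  is_subalg_basis v ->
  (forall s : seq L, exists x : L, x \notin s) ->
  f != 0 ->
  GL_pts iota v B ->
  exists xi : 'I_m -> L,
    [/\ (dgen iota v).@[xi] != 0,
        f.@[xi] / (dgen iota v).@[xi] ^+ k != 0 &
        exists Y : 'M[L]_n, GL_pts iota v Y /\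
          Aeval iota v xi = invmx Y *m B *m frobq #|F| Y].
Proof.
move=> hsub inf fnz GB.
have [C hC] := @exC F L iota n m v hsub.
exact: (@core F L iota n m v hsub C hC inf f k B fnz GB).
Qed.
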